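(* Let $X$ be a subshift of finite type, $Y$ a sofic shift, and $\pi : X \to Y$ a factor code which is right-closing and regular. Then there is a sliding block code $\rho : X \to X_{\mathbb K(Y)}$ such that $L_{\mathbb K(Y)}\circ\rho=\pi$.
   Context: A sliding block code $\pi:X\to Y$ is right-closing if whenever $x,x'\in X$ satisfy $\pi(x)=\pi(x')$ and $x_i=x'_i$ for all $i\le N$ for some $N\in\mathbb Z$, then $x=x'$. For $x\in X$ let $\mathbb U(x)=\{z\in X:\exists N\ \forall i\le N,\ z_i=x_i\}$; $x$ is regular for $\pi$ if $\pi$ maps $\mathbb U(x)$ onto $\mathbb U(\pi(x))$; $\mathcal R(\pi)$ is the set of such points, and $\pi$ is regular if $\mathcal R(\pi)$ is dense in $X$. For a sofic shift $Y\subseteq A^{\mathbb Z}$ and $y\in Y$, $F(y)=\{w\in Y[0,\infty): y_{(-\infty,-1]}w\in Y\}$, where $Y[0,\infty)=\{y_{[0,\infty)}:y\in Y\}$. The future cover $(\mathbb K(Y),L_{\mathbb K(Y)})$ is the labeled graph with vertices the distinct sets $F(y)$, $y\in Y$, and an edge labeled $a\in A$ from $F(y)$ to $F(z)$ exactly when $F(z)=\{w\in A^{\mathbb N}: aw\in F(y)\}$ (one edge per such pair and label); $X_{\mathbb K(Y)}$ is its edge shift and $L_{\mathbb K(Y)}:X_{\mathbb K(Y)}\to Y$ reads labels coordinatewise. *)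

(* Defs.v *)
From mathcomp Require Import all_boot.
From Stdlib Require Import ZArith.

Set Implicit Arguments.
Unset Strict Implicit.
Unset Printing Implicit Defensive.

Definition config (A : Type) := Z -> A.
Definition shiftset (A : Type) := config A -> Prop.

Definition block (A : Type) (x : config A) (i : Z) (n : nat) : seq A :=
  map (fun k => x (i + Z.of_nat k)%Z) (iota 0 n).

Definition is_SFT (A : finType) (X : shiftset A) : Prop :=
  exists (n : nat) (W : seq A -> Prop),
    forall x : config A, X x <-> (forall i : Z, W (block x i n)).

Definition is_sofic (B : finType) (Y : shiftset B) : Prop :=
  exists (V E : finType) (src tgt : E -> V) (lab : E -> B),
    forall y : config B,
      Y y <-> exists xi : config E,
                (forall i : Z, tgt (xi i) = src (xi (i + 1)%Z)) /\
                (forall i : Z, y i = lab (xi i)).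

Definition sliding_block_code (A B : Type) (X : shiftset A) (Y : shiftset B)
    (f : config A -> config B) : Prop :=
  (forall x, X x -> Y (f x)) /\
  exists (m a : nat) (Phi : seq A -> B),
    forall x, X x -> forall i : Z, f x i = Phi (block x (i - Z.of_nat m)%Z (m + a + 1)).

Definition factor_code (A B : Type) (X : shiftset A) (Y : shiftset B)
    (f : config A -> config B) : Prop :=
  sliding_block_code X Y f /\ forall y, Y y -> exists x, X x /\ f x = y.

Definition right_closing (A B : Type) (X : shiftset A) (f : config A -> config B) : Prop :=
  forall x x', X x -> X x' -> f x = f x' ->
    (exists N : Z, forall i : Z, (i <= N)%Z -> x i = x' i) -> x = x'.

Definition Uset (A : Type) (X : shiftset A) (x : config A) : shiftset A :=
  fun z => X z /\ exists N : Z, forall i : Z, (i <= N)%Z -> z i = x i.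

Definition regular_point (A B : Type) (X : shiftset A) (Y : shiftset B)
    (f : config A -> config B) (x : config A) : Prop :=
  forall y, Uset Y (f x) y <-> exists z, Uset X x z /\ f z = y.

(* f is regular: its regular points are dense in X (product topology) *)
Definition regular_code (A B : Type) (X : shiftset A) (Y : shiftset B)
    (f : config A -> config B) : Prop :=
  forall x, X x -> forall n : nat, exists r,
    X r /\ regular_point X Y f r /\
    forall i : Z, (- Z.of_nat n <= i <= Z.of_nat n)%Z -> r i = x i.

Definition rseq (B : Type) := nat -> B.
Definition fset (B : Type) := rseq B -> Prop.

Definition right_half (B : Type) (Y : shiftset B) : fset B :=
  fun w => exists y, Y y /\ forall n : nat, w n = y (Z.of_nat n).

Definition glue (B : Type) (y : config B) (w : rseq B) : config B :=
  fun i => if (i <? 0)%Z then y i else w (Z.to_nat i).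

Definition future (B : Type) (Y : shiftset B) (y : config B) : fset B :=
  fun w => right_half Y w /\ Y (glue y w).

Definition is_future (B : Type) (Y : shiftset B) (F : fset B) : Prop :=
  exists y, Y y /\ F = future Y y.

(* edges of K(Y): (source vertex, label, target vertex); there is at most
   one edge per (source, label, target) triple *)
Definition Kedge (B : Type) := (fset B * B * fset B)%type.

Definition Kedge_src (B : Type) (e : Kedge B) : fset B := e.1.1.
Definition Kedge_lab (B : Type) (e : Kedge B) : B := e.1.2.
Definition Kedge_tgt (B : Type) (e : Kedge B) : fset B := e.2.

Definition is_Kedge (B : Type) (Y : shiftset B) (e : Kedge B) : Prop :=
  is_future Y (Kedge_src e) /\ is_future Y (Kedge_tgt e) /\
  Kedge_tgt e = (fun w => Kedge_src e (fun n => match n with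
                                                 | 0 => Kedge_lab e
                                                 | S k => w k end)).

Definition XK (B : Type) (Y : shiftset B) : shiftset (Kedge B) :=
  fun xi => forall i : Z, is_Kedge Y (xi i) /\
                          Kedge_tgt (xi i) = Kedge_src (xi (i + 1)%Z).

Definition LK (B : Type) (xi : config (Kedge B)) : config B :=
  fun i => Kedge_lab (xi i).

(* Main.v *)
Require Import Defs.
From mathcomp Require Import all_boot.
From mathcomp Require Import zify.
From Stdlib Require Import ZArith Lia.
From Stdlib Require Import ClassicalEpsilon FunctionalExtensionality PropExtensionality Classical.
From mathcomp Require Import all_boot zify.

Set Implicit Arguments.
Unset Strict Implicit.
Definition sh (T : Type) (k : Z) (x : config T) : config T := fun i => x (i + k)%Z.

Lemma block_ext (T : Type) (u v : config T) (i i' : Z) (n : nat) :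
  (forall k, (k < n)%N -> u (i + Z.of_nat k)%Z = v (i' + Z.of_nat k)%Z) ->
  block u i n = block v i' n.
Proof.
move=> H; rewrite /block; apply/eq_in_map => k; rewrite mem_iota add0n => /andP[_ hk].
exact: H.
Qed.

Lemma block_pt (T : Type) (u v : config T) (i i' : Z) (n : nat) :
  block u i n = block v i' n ->
  forall k, (k < n)%N -> u (i + Z.of_nat k)%Z = v (i' + Z.of_nat k)%Z.
Proof.
move=> H k hk.
have := congr1 (fun s => nth (u i) s k) H.
rewrite /block !(nth_map 0%N) ?size_iota // nth_iota //.
Qed.

Lemma block_sh (T : Type) (x : config T) k i n :
  block (sh k x) i n = block x (i + k)%Z n.
Proof. apply: block_ext => j _; rewrite /sh; f_equal; lia. Qed.

Lemma sft_sh (A : finType) (X : shiftset A) : is_SFT X ->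
  forall x k, X x -> X (sh k x).
Proof.
move=> [n [W hX]] x k /hX Hx; apply/hX => i; rewrite block_sh; exact: Hx.
Qed.

Lemma sofic_sh (B : finType) (Y : shiftset B) : is_sofic Y ->
  forall y k, Y y -> Y (sh k y).
Proof.
move=> [V [E [src [tgt [lab hY]]]]] y k /hY [xi [h1 h2]]; apply/hY.
exists (sh k xi); split => i; rewrite /sh.
- rewrite h1; f_equal; f_equal; lia.
- exact: h2.
Qed.

Lemma sh_sh (T : Type) (x : config T) k l : sh k (sh l x) = sh (k + l) x.
Proof. apply: functional_extensionality => i; rewrite /sh; f_equal; lia. Qed.

Lemma sh0 (T : Type) (x : config T) : sh 0 x = x.
Proof. apply: functional_extensionality => i; rewrite /sh; f_equal; lia. Qed.

Definition inf (I : nat -> Prop) := forall M, exists D, (M <= D)%N /\ I D.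

Lemma pigeon (T : finType) (I : nat -> Prop) (f : nat -> T) :
  inf I -> exists t, inf (fun D => I D /\ f D = t).
Proof.
move=> hI; apply: NNPP => hn.
have H : forall t, exists M, forall D, (M <= D)%N -> ~ (I D /\ f D = t).
  move=> t; apply: NNPP => h; apply: hn; exists t => M.
  apply: NNPP => h'; apply: h; exists M => D hD hh; apply: h'; exists D; split => //.
pose g t := proj1_sig (constructive_indefinite_description _ (H t)).
have hg t : forall D, (g t <= D)%N -> ~ (I D /\ f D = t).
  rewrite /g; case: constructive_indefinite_description => //.
have [D [hD hID]] := hI (\max_(t : T) g t).
apply: (hg (f D) D) => //.
apply: leq_trans hD; exact: leq_bigmax.
Qed.
Section Compact.
Context (T : finType) (c : nat -> config T).

Definition pick (I : nat -> Prop) (z : Z) : T :=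
  epsilon (inhabits (c 0%N 0%Z)) (fun t => inf (fun D => I D /\ c D z = t)).

Lemma pick_spec I z : inf I -> inf (fun D => I D /\ c D z = pick I z).
Proof.
move=> hI; rewrite /pick; apply: (epsilon_spec _ (fun t => inf (fun D => I D /\ c D z = t))); exact: pigeon.
Qed.

Definition step1 (I : nat -> Prop) (k : nat) : nat -> Prop :=
  fun D => I D /\ c D (Z.of_nat k) = pick I (Z.of_nat k).
Definition step2 (I : nat -> Prop) (k : nat) : nat -> Prop :=
  fun D => I D /\ c D (- Z.of_nat k)%Z = pick I (- Z.of_nat k)%Z.

Fixpoint stage (k : nat) : nat -> Prop :=
  match k with
  | 0 => fun _ => True
  | S k => step2 (step1 (stage k) k) k
  end.

Definition lim (z : Z) : T :=
  if (0 <=? z)%Z then pick (stage (Z.to_nat z)) z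
  else pick (step1 (stage (Z.to_nat (- z))) (Z.to_nat (- z))) z.

Lemma stage_inf k : inf (stage k).
Proof.
elim: k => [|k IH] /=.
  by move=> M; exists M.
apply: pick_spec; apply: pick_spec; exact: IH.
Qed.

Lemma stage_mono k k' D : (k <= k')%N -> stage k' D -> stage k D.
Proof.
elim: k' => [|k' IH]; first by rewrite leqn0 => /eqP ->.
rewrite leq_eqVlt => /orP [/eqP -> //|hk] /= [[h _] _].
apply: IH => //.
Qed.

Lemma stage_lim k D : stage (S k) D ->
  c D (Z.of_nat k) = lim (Z.of_nat k) /\ c D (- Z.of_nat k)%Z = lim (- Z.of_nat k)%Z.
Proof.
move=> /= [[_ h1] h2]; rewrite /lim.
have -> : (0 <=? Z.of_nat k)%Z = true by apply/Z.leb_le; lia.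
rewrite Nat2Z.id; split => //.
case: k h1 h2 => [|k] h1 h2.
  by rewrite /= h1.
have -> : (0 <=? (- Z.of_nat k.+1))%Z = false by apply/Z.leb_gt; lia.
by rewrite Z.opp_involutive Nat2Z.id.
Qed.

Lemma compact : forall N M : nat, exists D, (M <= D)%N /\
  forall i, (- Z.of_nat N <= i <= Z.of_nat N)%Z -> c D i = lim i.
Proof.
move=> N M; have [D [hD hs]] := stage_inf N.+1 M.
exists D; split => // i hi.
have hk : (Z.to_nat (Z.abs i) <= N)%N by lia.
have hk' : ((Z.to_nat (Z.abs i)).+1 <= N.+1)%N by rewrite ltnS.
have := stage_lim (stage_mono hk' hs).
case=> h1 h2.
case: (Z.le_gt_cases 0 i) => hi0.
  have -> : i = Z.of_nat (Z.to_nat (Z.abs i)) by lia.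
  exact: h1.
have -> : i = (- Z.of_nat (Z.to_nat (Z.abs i)))%Z by lia.
exact: h2.
Qed.
End Compact.
Section Main.
Context (A B : finType) (X : shiftset A) (Y : shiftset B) (pi : config A -> config B).
Context (n : nat) (W : seq A -> Prop) (hX : forall x, X x <-> (forall i, W (block x i n))).
Context (m a : nat) (Phi : seq A -> B)
  (hpi : forall x, X x -> forall i, pi x i = Phi (block x (i - Z.of_nat m)%Z (m + a + 1))).
Context (hRC : right_closing X pi).

Lemma FD : exists D : nat, forall u v j, X u -> X v ->
  (forall i, (j - Z.of_nat D <= i < j)%Z -> u i = v i) ->
  (forall i, (j - Z.of_nat D <= i <= j + Z.of_nat D)%Z -> pi u i = pi v i) ->
  u j = v j.
Proof.
apply: NNPP => hn.
have H : forall D : nat, exists p : config A * config A * Z,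
  X p.1.1 /\ X p.1.2 /\
  (forall i, (p.2 - Z.of_nat D <= i < p.2)%Z -> p.1.1 i = p.1.2 i) /\
  (forall i, (p.2 - Z.of_nat D <= i <= p.2 + Z.of_nat D)%Z -> pi p.1.1 i = pi p.1.2 i) /\
  p.1.1 p.2 <> p.1.2 p.2.
  move=> D; apply: NNPP => h; apply: hn; exists D => u v j hu hv h1 h2.
  apply: NNPP => h3; apply: h; exists (u, v, j); split => //.
pose f D := proj1_sig (constructive_indefinite_description _ (H D)).
have hf D : let p := f D in X p.1.1 /\ X p.1.2 /\
  (forall i, (p.2 - Z.of_nat D <= i < p.2)%Z -> p.1.1 i = p.1.2 i) /\
  (forall i, (p.2 - Z.of_nat D <= i <= p.2 + Z.of_nat D)%Z -> pi p.1.1 i = pi p.1.2 i) /\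
  p.1.1 p.2 <> p.1.2 p.2.
  rewrite /f; case: constructive_indefinite_description => //.
pose c (D : nat) : config (A * A)%type := fun i => ((f D).1.1 (i + (f D).2)%Z, (f D).1.2 (i + (f D).2)%Z).
have hc := compact c.
set l := lim c in hc.
pose u := fun i => (l i).1.
pose v := fun i => (l i).2.
have agree : forall N M, exists D, (M <= D)%N /\
   (forall i, (- Z.of_nat N <= i <= Z.of_nat N)%Z ->
      u i = (f D).1.1 (i + (f D).2)%Z /\ v i = (f D).1.2 (i + (f D).2)%Z).
  move=> N M; have [D [hD hh]] := hc N M; exists D; split => // i hi.
  by rewrite /u /v -hh.
have Xu : X u.
  apply/hX => i; have [D [_ hh]] := agree (Z.to_nat (Z.abs i) + n)%N 0%N.
  have [hu _] := hf D.
  move/hX: hu => /(_ (i + (f D).2)%Z).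
  suff -> : block u i n = block (f D).1.1 (i + (f D).2)%Z n by [].
  apply: block_ext => k hk; rewrite (hh _ _).1; first by f_equal; lia.
  lia.
have Xv : X v.
  apply/hX => i; have [D [_ hh]] := agree (Z.to_nat (Z.abs i) + n)%N 0%N.
  have [_ [hv _]] := hf D.
  move/hX: hv => /(_ (i + (f D).2)%Z).
  suff -> : block v i n = block (f D).1.2 (i + (f D).2)%Z n by [].
  apply: block_ext => k hk; rewrite (hh _ _).2; first by f_equal; lia.
  lia.
have piuv : pi u = pi v.
  apply: functional_extensionality => i.
  have [D [hD hh]] := agree (Z.to_nat (Z.abs i) + m + a)%N (Z.to_nat (Z.abs i)).
  have [hu [hv [_ [h2 _]]]] := hf D.
  rewrite (hpi Xu) (hpi Xv).
  have -> : block u (i - Z.of_nat m) (m + a + 1) = block (f D).1.1 (i + (f D).2 - Z.of_nat m)%Z (m + a + 1).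
    apply: block_ext => k hk; rewrite (hh _ _).1; first by f_equal; lia.
    lia.
  have -> : block v (i - Z.of_nat m) (m + a + 1) = block (f D).1.2 (i + (f D).2 - Z.of_nat m)%Z (m + a + 1).
    apply: block_ext => k hk; rewrite (hh _ _).2; first by f_equal; lia.
    lia.
  rewrite -(hpi hu) -(hpi hv); apply: h2; lia.
have uv : u = v.
  apply: hRC => //; exists (-1)%Z => i hi.
  have [D [hD hh]] := agree (Z.to_nat (Z.abs i)) (Z.to_nat (Z.abs i)).
  have [_ [_ [h1 _]]] := hf D.
  rewrite (hh i _).1; last lia.
  rewrite (hh i _).2; last lia.
  apply: h1; lia.
have [D [_ hh]] := agree 0%N 0%N.
have [_ [_ [_ [_ hne]]]] := hf D.
apply: hne.
have := hh 0%Z ltac:(lia); rewrite uv => -[<- <-] //.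
Qed.
End Main.
Section Key.
Context (A B : finType) (X : shiftset A) (Y : shiftset B) (pi : config A -> config B).
Context (n : nat) (W : seq A -> Prop) (hX : forall x, X x <-> (forall i, W (block x i n))).
Context (m a : nat) (Phi : seq A -> B)
  (hpi : forall x, X x -> forall i, pi x i = Phi (block x (i - Z.of_nat m)%Z (m + a + 1))).
Context (hRC : right_closing X pi) (hpiY : forall x, X x -> Y (pi x)).

Definition Reg' (r : config A) := forall y, Uset Y (pi r) y -> exists z, Uset X r z /\ pi z = y.

Lemma KL : exists K : nat, forall r x, X r -> X x -> Reg' r ->
  (forall i, (- Z.of_nat K <= i <= Z.of_nat K)%Z -> r i = x i) ->
  forall w, future Y (pi r) w -> future Y (pi x) w.
Proof.
have [D hD] := FD hX hpi hRC.
exists (D + n + m + a + 2)%N => r x Xr Xx hr hrx w [hw hy].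
pose p := (- Z.of_nat D - 1)%Z.
have [z [[Xz [N0 hN0]] hz]] : exists z, Uset X r z /\ pi z = glue (pi r) w.
  apply: hr; split => //; exists (-1)%Z => i hi; rewrite /glue.
  by have -> : (i <? 0)%Z = true by apply/Z.ltb_lt; lia.
have hzneg : forall i, (i < 0)%Z -> pi z i = pi r i.
  move=> i hi; rewrite hz /glue.
  by have -> : (i <? 0)%Z = true by apply/Z.ltb_lt; lia.
have delay : forall k : nat, forall i, (i <= N0 + Z.of_nat k)%Z -> (i <= p)%Z -> z i = r i.
  elim=> [|k IH] i h1 h2.
    apply: hN0; lia.
  case: (Z.le_gt_cases i (N0 + Z.of_nat k)) => h3; first exact: IH.
  apply: hD => // i' hi'.
    apply: IH; lia.
  apply: hzneg; rewrite /p in h2; lia.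
have zr : forall i, (i <= p)%Z -> z i = r i.
  move=> i hi; case: (Z.le_gt_cases i N0) => h.
    exact: hN0.
  apply: (delay (Z.to_nat (i - N0))) => //; lia.
pose z' := fun i => if (i <=? p)%Z then x i else z i.
have z'x : forall i, (i <= p)%Z -> z' i = x i.
  by move=> i hi; rewrite /z'; have -> : (i <=? p)%Z = true by apply/Z.leb_le.
have z'z : forall i, (p - Z.of_nat (n + m + a) <= i)%Z -> z' i = z i.
  move=> i hi; rewrite /z'; case: (Z.leb_spec i p) => h //.
  rewrite zr // hrx //; rewrite /p in hi h *; lia.
have Xz' : X z'.
  apply/hX => i; case: (Z.le_gt_cases (i + Z.of_nat n) (p + 1)) => h.
    have -> : block z' i n = block x i n.
      apply: block_ext => k hk; apply: z'x; lia.
    by move/hX: Xx.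
  have -> : block z' i n = block z i n.
    apply: block_ext => k hk; apply: z'z; lia.
  by move/hX: Xz.
have pz' : pi z' = glue (pi x) w.
  apply: functional_extensionality => i.
  rewrite (hpi Xz').
  case: (Z.le_gt_cases (i + Z.of_nat a) p) => h.
    have -> : block z' (i - Z.of_nat m) (m + a + 1) = block x (i - Z.of_nat m) (m + a + 1).
      apply: block_ext => k hk; apply: z'x; lia.
    rewrite -(hpi Xx) /glue.
    by have -> : (i <? 0)%Z = true by apply/Z.ltb_lt; rewrite /p in h; lia.
  have -> : block z' (i - Z.of_nat m) (m + a + 1) = block z (i - Z.of_nat m) (m + a + 1).
    apply: block_ext => k hk; apply: z'z; lia.
  rewrite -(hpi Xz) hz /glue.
  case: (Z.ltb_spec i 0) => hi //.
  rewrite !(hpi Xr) (hpi Xx); congr Phi; apply: block_ext => k hk.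
  apply: hrx; rewrite /p in h; lia.
split => //; rewrite -pz'; exact: hpiY.
Qed.
End Key.
Lemma pi_sh (A B : finType) (X : shiftset A) (pi : config A -> config B) m a Phi
  (hpi : forall x, X x -> forall i, pi x i = Phi (block x (i - Z.of_nat m)%Z (m + a + 1)))
  (hSFT : is_SFT X) x k : X x -> pi (sh k x) = sh k (pi x).
Proof.
move=> Xx; apply: functional_extensionality => i.
rewrite /sh (hpi _ (sft_sh hSFT k Xx)) (hpi _ Xx) block_sh; congr Phi; f_equal; lia.
Qed.

Lemma glue_eq (B : Type) (y : config B) (w : rseq B) :
  glue y (fun n0 => match n0 with 0 => y 0%Z | S k => w k end) = sh (-1) (glue (sh 1 y) w).
Proof.
apply: functional_extensionality => i; rewrite /glue /sh.
case: (Z.ltb_spec i 0) => h1; case: (Z.ltb_spec (i + -1) 0) => h2.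
- f_equal; lia.
- lia.
- have -> : i = 0%Z by lia. by [].
- have -> : Z.to_nat i = S (Z.to_nat (i + -1)) by lia. by [].
Qed.

Lemma future_sh (B : finType) (Y : shiftset B) (hsof : is_sofic Y) y : Y y ->
  future Y (sh 1 y) = fun w => future Y y (fun n0 => match n0 with 0 => y 0%Z | S k => w k end).
Proof.
move=> Yy; apply: functional_extensionality => w; apply: propositional_extensionality.
rewrite /future glue_eq; split.
- move=> [_ hy]; have hy' := sofic_sh hsof (-1) hy; split => //.
  exists (sh (-1) (glue (sh 1 y) w)); split => // n0.
  rewrite -glue_eq /glue.
  have -> : (Z.of_nat n0 <? 0)%Z = false by apply/Z.ltb_ge; lia.
  by rewrite Nat2Z.id.
- move=> [_ hy]; have hy' := sofic_sh hsof 1 hy.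
  rewrite sh_sh /= sh0 in hy'; split => //.
  exists (glue (sh 1 y) w); split => // n0; rewrite /glue.
  have -> : (Z.of_nat n0 <? 0)%Z = false by apply/Z.ltb_ge; lia.
  by rewrite Nat2Z.id.
Qed.

Lemma Reg_sh (A B : finType) (X : shiftset A) (Y : shiftset B) (pi : config A -> config B) m a Phi
  (hpi : forall x, X x -> forall i, pi x i = Phi (block x (i - Z.of_nat m)%Z (m + a + 1)))
  (hSFT : is_SFT X) (hsof : is_sofic Y) r k :
  X r -> Reg' X Y pi r -> Reg' X Y pi (sh k r).
Proof.
move=> Xr hr y [Yy [N hN]].
have [z [[Xz [N' hN']] hz]] : exists z, Uset X r z /\ pi z = sh (-k) y.
  apply: hr; split; first exact: sofic_sh.
  exists (N + k)%Z => i hi; rewrite /sh hN; last lia.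
  rewrite (pi_sh hpi hSFT _ Xr) /sh; f_equal; lia.
exists (sh k z); split.
  split; first exact: sft_sh.
  exists (N' - k)%Z => i hi; rewrite /sh; apply: hN'; lia.
rewrite (pi_sh hpi hSFT _ Xz) hz sh_sh.
have -> : (k + - k)%Z = 0%Z by lia.
exact: sh0.
Qed.
Theorem proposition3p13 (A B : finType) (X : shiftset A) (Y : shiftset B)
    (pi : config A -> config B) :
  is_SFT X -> is_sofic Y ->
  factor_code X Y pi -> right_closing X pi -> regular_code X Y pi ->
  exists rho : config A -> config (Kedge B),
    sliding_block_code X (XK Y) rho /\
    forall x, X x -> LK (rho x) = pi x.
Proof.
move=> hSFT hsof [[hpiY [m [a [Phi hpi]]]] _] hRC hreg.
have [n [W hX]] := hSFT.
have [K hK] := KL hX hpi hRC hpiY.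
pose N := (K + m + a + 1)%N.
pose Good r := X r /\ Reg' X Y pi r.
pose E (r : config A) : Kedge B := (future Y (pi r), pi r 0%Z, future Y (pi (sh 1 r))).
pose dflt : Kedge B := (fun _ => False, Phi [::], fun _ => False).
pose Phi' (s : seq A) : Kedge B :=
  match excluded_middle_informative (exists r, Good r /\ block r (- Z.of_nat N) (N + N + 1) = s) with
  | left H => E (proj1_sig (constructive_indefinite_description _ H))
  | right _ => dflt end.
pose rho (x : config A) (i : Z) := Phi' (block x (i - Z.of_nat N)%Z (N + N + 1)).
have rho_spec : forall x, X x -> forall i, exists r, Good r /\
    (forall j, (- Z.of_nat N <= j <= Z.of_nat N)%Z -> r j = x (j + i)%Z) /\ rho x i = E r.
  move=> x Xx i; rewrite /rho /Phi'.
  case: excluded_middle_informative => [H|H].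
    case: constructive_indefinite_description => r [Gr hb] /=.
    exists r; split => //; split => // j hj.
    have := block_pt hb (k := Z.to_nat (j + Z.of_nat N)) ltac:(lia).
    have -> : (- Z.of_nat N + Z.of_nat (Z.to_nat (j + Z.of_nat N)))%Z = j by lia.
    move=> ->; f_equal; lia.
  exfalso; apply: H.
  have [r [Xr [hr hri]]] := hreg _ (sft_sh hSFT i Xx) N.
  exists r; split.
    split => //; move=> y; exact: (proj1 (hr y)).
  apply: block_ext => k hk; rewrite hri /sh; first by f_equal; lia.
  lia.
exists rho; split; last first.
  move=> x Xx; apply: functional_extensionality => i.
  have [r [[Xr _] [hr e]]] := rho_spec x Xx i.
  rewrite /LK e /Kedge_lab /= (hpi _ Xr) (hpi _ Xx); congr Phi.
  apply: block_ext => k hk; rewrite hr; first by f_equal; lia.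
  lia.
split; last first.
  exists N, N, Phi' => x _ i; by [].
move=> x Xx i.
have [r1 [[Xr1 R1] [hr1 ->]]] := rho_spec x Xx i.
have [r2 [[Xr2 R2] [hr2 ->]]] := rho_spec x Xx (i + 1)%Z.
have Xs := sft_sh hSFT 1 Xr1.
have Rs := Reg_sh hpi hSFT hsof (k:=1) Xr1 R1.
split; last first.
  rewrite /Kedge_tgt /Kedge_src /=.
  apply: functional_extensionality => w; apply: propositional_extensionality.
  have hag : forall j, (- Z.of_nat K <= j <= Z.of_nat K)%Z -> sh 1 r1 j = r2 j.
    move=> j hj; rewrite /sh hr1 ?hr2; try lia. f_equal; lia.
  split; first apply: (hK _ _ Xs Xr2 Rs hag).
  apply: (hK _ _ Xr2 Xs R2) => j hj; rewrite hag //.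
split.
  exists (pi r1); split => //; exact: hpiY.
split.
  exists (pi (sh 1 r1)); split => //; exact: hpiY.
rewrite /Kedge_tgt /Kedge_src /Kedge_lab /= (pi_sh hpi hSFT _ Xr1).
exact: future_sh (hpiY _ Xr1).
Qed.
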